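(* Let $G$ be a finite group and $\rho:G\to GL(V)$ a finite-dimensional representation over an algebraically closed field $\mathbb{F}$ of characteristic $p$. Let $N$ be the subgroup of $G$ generated by the $p$-regular elements of $\ker\rho$. Then $N$ is normal in $G$, and $\rho$ factors through a representation $\overline\rho:G/N\to GL(V)$ which is tensor-rich (as an $\mathbb{F}[G/N]$-module).
   Context: An element of a finite group is $p$-regular if its order is invertible in $\mathbb{F}$. For a group $H$, an $\mathbb{F}H$-module $W$ is rich if every simple $\mathbb{F}H$-module occurs as a composition factor of $W$, and tensor-rich if $\bigoplus_{k=0}^tW^{\otimes k}$ is rich for some positive integer $t$ (with $H$ acting diagonally on tensor products over $\mathbb{F}$ and trivially on $W^{\otimes0}=\mathbb{F}$). *)

(* Defs.v *)
From HB Require Import structures.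
From mathcomp Require Import all_boot all_order all_fingroup all_algebra all_solvable.
From mathcomp Require Import mxrepresentation character.
Set Implicit Arguments.
Unset Strict Implicit.
Unset Printing Implicit Defensive.
Import GRing.Theory.
Local Open Scope ring_scope.
Local Open Scope group_scope.

Definition p_regular (F : fieldType) (gT : finGroupType) (x : gT) : bool :=
  ((#[x]%N)%:R : F) \is a GRing.unit.

Definition preg_ker_subgroup (F : fieldType) (gT : finGroupType) (G : {group gT})
    (n : nat) (rG : mx_representation F G n) : {group gT} :=
  <<[set x in rker rG | p_regular F x]>>%G.

Section TensorRich.
Variables (F : fieldType) (gT : finGroupType) (H : {group gT}).

Lemma triv_mx_repr : mx_repr H (fun _ : gT => 1%:M : 'M[F]_1).
Proof. by split=> // x y _ _; rewrite mulmx1. Qed.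

Definition triv_grepr : representation F H :=
  Representation (MxRepresentation triv_mx_repr).

Fixpoint tpow_grepr (rW : representation F H) (k : nat) : representation F H :=
  if k is k'.+1 then Representation (prod_repr rW (tpow_grepr rW k'))
  else triv_grepr.

Definition tsum_grepr (rW : representation F H) (t : nat) : representation F H :=
  \big[@dadd_grepr F gT H/@grepr0 F gT H]_(k < t.+1) tpow_grepr rW k.

(* W is rich: every simple F[H]-module (irreducible representation of H)
   occurs (up to isomorphism) as a composition factor of W. *)
Definition rich (rW : representation F H) : Prop :=
  forall rS : representation F H, mx_irreducible rS ->
    exists Us : seq 'M[F]_(rdegree rW),
    exists compUs : mx_composition_series rW Us,
      (last 0 Us == 1%:M)%MS /\
      exists i, exists lt_i : (i < size Us)%N,
        mx_rsim (series_repr i compUs) rS.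

Definition tensor_rich (rW : representation F H) : Prop :=
  exists t : nat, (0 < t)%N /\ rich (tsum_grepr rW t).

End TensorRich.

(* Main.v *)
Require Import Defs.
From HB Require Import structures.
From mathcomp Require Import all_boot all_order all_fingroup all_algebra all_solvable.
From mathcomp Require Import mxrepresentation character.
From mathcomp Require Import mxabelem.
From Stdlib Require Import Classical.
From mathcomp Require Import zify.
Set Implicit Arguments.
Unset Strict Implicit.
Unset Printing Implicit Defensive.
Import GRing.Theory.
Local Open Scope ring_scope.
Local Open Scope group_scope.
Section Gen.
Variables (F : fieldType) (gT : finGroupType) (G : {group gT}).

Lemma gring_mx_sum n (rG : mx_representation F G n) (a : 'rV_#|G|) :
  gring_mx rG a = \sum_(i < #|G|) a 0 i *: rG (enum_val i).
Proof.
rewrite /gring_mx /= mulmx_sum_row linear_sum; apply: eq_bigr => i _.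
by rewrite linearZ /= rowK mxvecK.
Qed.

Section Series.
Variables (n : nat) (rG : mx_representation F G n).
Variables (s : nat) (rS : mx_representation F G s).

Lemma series_of_section U W (modU : mxmodule rG U) (modW : mxmodule rG W) :
  mx_irreducible rS -> (U <= W)%MS -> mx_rsim (section_repr modU modW) rS ->
  exists Us : seq 'M[F]_n,
    exists compUs : mx_composition_series rG Us,
      (last 0 Us == 1%:M)%MS /\
      exists i, exists lt_i : (i < size Us)%N,
        mx_rsim (series_repr i compUs) rS.
Proof.
move=> irrS0 sUW simS.
have irrS : mx_irreducible (section_repr modU modW).
  exact: mx_rsim_irr (mx_rsim_sym simS) irrS0.
have := proj2 (max_submodP modU modW sUW) irrS; rewrite /max_submod => -[ltUW maxU].
set goal := exists Us, _.
case: (classic goal) => // ngoal; exfalso.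
pose L0 := if U == 0 then [:: W] else [:: U; W].
have modL0 : mx_subseries rG L0 by rewrite /L0; case: ifP => _ /=; rewrite ?modU modW.
have W0 : W != 0.
  by apply: contraTneq ltUW => ->; rewrite ltmx0.
have pL0 : path ltmx 0 L0.
  rewrite /L0; case: ifP => U0 /=; rewrite ?ltUW ?lt0mx ?W0 ?U0 //.
suff: false by [].
apply: (mx_Schreier modL0 pL0) => -[V [compV lastV subV]].
case: ngoal; exists V, compV; split; first exact/eqmxP.
have srt : sorted ltmx (0 :: V) by exact: mx_series_lt compV.
have hsub := mem_subseq subV.
have WV : W \in V.
  by apply: hsub; rewrite /L0; case: ifP => _; rewrite !inE ?eqxx ?orbT.
have UV : U \in 0 :: V.
  rewrite inE; case: eqP => //= U0; apply: hsub.
  rewrite /L0; case: ifP => [/eqP//|_]; by rewrite !inE ?eqxx.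
have WV' : W \in 0 :: V by rewrite inE WV orbT.
set V0 := 0 :: V.
set a := index U V0; set b := index W V0.
have ha : (a < size V0)%N by rewrite index_mem.
have hb : (b < size V0)%N by rewrite index_mem.
have nA : nth 0 V0 a = U by rewrite nth_index.
have nB : nth 0 V0 b = W by rewrite nth_index.
have mono := sorted_ltn_nth (@ltmx_trans F n n) 0 srt.
have ltab : (a < b)%N.
  rewrite ltnNge leq_eqVlt; apply/negP => /orP[/eqP eab | lba].
    by move: ltUW; rewrite -nA -nB eab ltmx_irrefl.
  have := mono b a hb ha lba; rewrite nA nB => ltWU.
  by move: (ltmx_trans ltUW ltWU); rewrite ltmx_irrefl.
have eb : b = a.+1.
  apply/eqP; rewrite eqn_leq ltab andbT leqNgt; apply/negP => lt1.
  have ha1 : (a.+1 < size V0)%N by apply: ltn_trans hb.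
  case: (maxU (nth 0 V0 a.+1)); split.
  - by rewrite /= (mx_subseries_module a (proj1 compV)).
  - by have := mono a a.+1 ha ha1 (ltnSn a); rewrite nA.
  - by have := mono a.+1 b ha1 hb lt1; rewrite nB.
have lta : (a < size V)%N by rewrite -ltnS -eb.
exists a, lta.
apply: mx_rsim_trans simS.
apply: mx_rsim_sym; apply: section_eqmx.
  by rewrite nA.
by rewrite -nB eb.
Qed.
End Series.
Section Sec.
Variables (n : nat) (rM : mx_representation F G n).
Variables (s : nat) (rS : mx_representation F G s).
Hypothesis irrS : mx_irreducible rS.

Lemma section_hom_rsim W (modW : mxmodule rM W) (h : 'M[F]_(n, s)) :
  (forall x, x \in G -> W *m rM x *m h = W *m h *m rS x) -> W *m h != 0 ->
  exists modU : mxmodule rM (W :&: kermx h)%MS,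
    mx_rsim (section_repr modU modW) rS.
Proof.
move=> homh nzWh.
have homD k (D : 'M_(k, n)) x : x \in G -> (D <= W)%MS ->
    D *m rM x *m h = D *m h *m rS x.
  move=> Gx /submxP[E ->]; rewrite -!mulmxA; congr (E *m _).
  by rewrite !mulmxA homh.
set U := (W :&: kermx h)%MS.
have sUW : (U <= W)%MS := capmxSl _ _.
have Uh k (D : 'M_(k, n)) : (D <= U)%MS -> D *m h = 0.
  by move=> sDU; apply/sub_kermxP; apply: submx_trans sDU (capmxSr _ _).
have modU : mxmodule rM U.
  apply/mxmoduleP => x Gx; rewrite sub_capmx; apply/andP; split.
    exact: submx_trans (submxMr _ sUW) (mxmoduleP modW x Gx).
  by apply/sub_kermxP; rewrite homD // ?Uh ?mul0mx.
exists modU.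
set SW := <<in_factmod U W>>%MS.
pose Z := val_factmod (@val_submod _ _ SW _ 1%:M) : 'M_(\rank SW, n).
have ZW : (Z <= W)%MS.
  rewrite /Z; have := val_submodP (U := SW) 1%:M; rewrite genmxE => /submxP[D ->].
  rewrite in_factmodE mulmxA -in_factmodE.
  apply: submx_trans (proj_factmodS _ _) _.
  by rewrite addsmx_sub sUW submxMl.
pose B := Z *m h.
have rWh : \rank (W *m h) = s.
  have modWh : mxmodule rS <<W *m h>>%MS.
    rewrite (eqmx_module _ (genmxE _)); apply/mxmoduleP => x Gx.
    by rewrite -homh // submxMr // (mxmoduleP modW).
  have [_ irr] := proj1 (mx_irrP rS) irrS.
  have := irr _ modWh; rewrite -mxrank_eq0 genmxE mxrank_eq0 => /(_ nzWh).
  by rewrite /row_full genmxE => /eqP.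
apply: (@MxReprSim _ _ _ _ _ _ _ B).
- rewrite genmxE -rWh; apply/eqP; rewrite -(eqn_add2r (\rank U)).
  rewrite mxrank_in_factmod (addsmx_idPr sUW).
  by rewrite -(mxrank_mul_ker W h) addnC.
- rewrite -kermx_eq0; apply/rowV0P => v /sub_kermxP; rewrite mulmxA => vZh.
  have zdef : v *m Z = val_factmod (val_submod v).
    by rewrite /Z val_factmodE mulmxA -val_submodE -val_factmodE.
  have zU : (v *m Z <= U)%MS.
    rewrite sub_capmx (submx_trans (submxMl v Z) ZW) /=.
    exact/sub_kermxP.
  have zC : (v *m Z <= U^C)%MS by rewrite zdef val_factmodP.
  have : (v *m Z <= U :&: U^C)%MS by rewrite sub_capmx zU zC.
  rewrite capmx_compl submx0 zdef val_factmod_eq0 val_submod_eq0.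
  by move/eqP.
- move=> x Gx.
  rewrite /B mulmxA -(homD _ Z x Gx ZW).
  have e1 := val_submodJ (section_module modU modW) 1%:M Gx.
  rewrite mul1mx in e1.
  have e2 : section_repr modU modW x *m Z =
      val_factmod (in_factmod U (Z *m rM x)).
    rewrite /Z val_factmodE mulmxA -val_submodE.
    have -> : val_submod (section_repr modU modW x) =
        val_submod (U := SW) 1%:M *m factmod_mx modU x by exact: e1.
    transitivity (val_factmod (val_submod (U:=SW) 1%:M *m factmod_mx modU x)).
      by rewrite [RHS]val_factmodE.
    rewrite (val_factmodJ modU (val_submod (U:=SW) 1%:M) Gx).
    by congr (val_factmod (in_factmod U (_ *m _))); exact: val_factmodE.
  rewrite e2; set Y := Z *m rM x.
  have := add_sub_fact_mod U Y => /(canRL (addKr _)) ->.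
  by rewrite mulmxDl mulNmx (Uh _ _ (val_submodP _)) oppr0 add0r.
Qed.
End Sec.
End Gen.
Section Pair.
Variables (F : fieldType) (gT : finGroupType) (G : {group gT}).
Variables (n : nat) (rM : mx_representation F G n).
Variables (s : nat) (rS : mx_representation F G s).
Hypothesis irrS : mx_irreducible rS.
Local Notation aG := (regular_repr F G).

Lemma lin_hom k (rX : mx_representation F G k) (v : 'rV_k) x : x \in G ->
  lin1_mx (mulmx v \o gring_mx rX) *m rX x =
  aG x *m lin1_mx (mulmx v \o gring_mx rX).
Proof.
move=> Gx; apply/row_matrixP => i; rewrite !row_mul.
by rewrite (rowE i (aG x)) rowE !mul_rV_lin1 /= -mulmxA -gring_mxJ //.
Qed.

Lemma pair_rich (m : 'rV_n) (s0 : 'rV_s) : s0 != 0 ->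
  (forall c : 'rV_#|G|, m *m gring_mx rM c = 0 -> s0 *m gring_mx rS c = 0) ->
  exists Us : seq 'M[F]_n,
    exists compUs : mx_composition_series rM Us,
      (last 0 Us == 1%:M)%MS /\
      exists i, exists lt_i : (i < size Us)%N,
        mx_rsim (series_repr i compUs) rS.
Proof.
move=> nz_s0 ann.
pose fM := lin1_mx (mulmx m \o gring_mx rM).
pose fS := lin1_mx (mulmx s0 \o gring_mx rS).
pose h := pinvmx fM *m fS.
have fMh : fM *m h = fS.
  have PfM : fM *m pinvmx fM *m fM = fM by rewrite mulmxKpV.
  apply/eqP; rewrite /h mulmxA -subr_eq0 -{2}[fS]mul1mx -mulmxBl.
  apply/eqP/row_matrixP => i; rewrite row_mul row0.
  set c := row i _.
  have : c *m fM = 0.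
    by rewrite /c -row_mul mulmxBl mul1mx PfM subrr row0.
  rewrite !mul_rV_lin1 /= => /ann.
  done.
clearbody h.
have homM x : x \in G -> fM *m rM x = aG x *m fM by move=> Gx; rewrite lin_hom.
have homS x : x \in G -> fS *m rS x = aG x *m fS by move=> Gx; rewrite lin_hom.
set W := <<fM>>%MS.
have modW : mxmodule rM W.
  rewrite (eqmx_module _ (genmxE _)); apply/mxmoduleP => x Gx.
  by rewrite homM // submxMl.
have homh x : x \in G -> W *m rM x *m h = W *m h *m rS x.
  move=> Gx; have /submxP[D ->] : (W <= fM)%MS by rewrite genmxE.
  have fMh' k (A : 'M_(k, #|G|)) : A *m fM *m h = A *m fS by rewrite -mulmxA fMh.
  rewrite -!mulmxA; congr (D *m _); rewrite !mulmxA homM // fMh'.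
  by rewrite fMh homS.
have nzWh : W *m h != 0.
  apply: contraNneq nz_s0 => Wh0.
  have /submxP[D eD] : (fM <= W)%MS by rewrite genmxE.
  have fS0 : fS = 0 by rewrite -fMh eD -mulmxA Wh0 mulmx0.
  have := congr1 (mulmx (gring_row (aG 1%g))) fS0.
  rewrite mul_rV_lin1 /= -gring_opE gring_opG // repr_mx1 mulmx1 mulmx0.
  by move=> ->.
have [modU simU] := section_hom_rsim irrS modW homh nzWh.
exact: series_of_section irrS (capmxSl _ _) simU.
Qed.

Lemma ann_rich :
  (forall c : 'rV_#|G|, gring_mx rM c = 0 -> gring_mx rS c = 0) ->
  exists Us : seq 'M[F]_n,
    exists compUs : mx_composition_series rM Us,
      (last 0 Us == 1%:M)%MS /\
      exists i, exists lt_i : (i < size Us)%N,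
        mx_rsim (series_repr i compUs) rS.
Proof.
move=> Ann.
set s1 := nz_row (1%:M : 'M[F]_s).
have nz1 : s1 != 0 := nz_row_mxsimple irrS.
suff main : forall j (c0 : 'rV_#|G|),
    (forall i : 'I_n, (i < n - j)%N -> (delta_mx 0 i : 'rV[F]_n) *m gring_mx rM c0 = 0) ->
    s1 *m gring_mx rS c0 != 0 -> exists Us : seq 'M[F]_n,
    exists compUs : mx_composition_series rM Us,
      (last 0 Us == 1%:M)%MS /\
      exists i, exists lt_i : (i < size Us)%N,
        mx_rsim (series_repr i compUs) rS.
  apply: (main n (gring_row (aG 1%g))) => [i|].
    by rewrite subnn ltn0.
  by rewrite -gring_opE gring_opG // repr_mx1 mulmx1.
elim=> [|j IHj] c0 H0 Hs.
  case/negP: Hs; rewrite (Ann c0) ?mulmx0 //.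
  apply/row_matrixP => i; rewrite row0 rowE; apply: H0.
  by rewrite subn0.
have [lejn | ltjn] := leqP n j.
  apply: IHj Hs => i; have -> : (n - j = 0)%N by lia.
  by rewrite ltn0.
have ltk : (n - j.+1 < n)%N by lia.
pose i0 := Ordinal ltk.
case: (classic (exists c : 'rV_#|G|,
   (delta_mx 0 i0 : 'rV[F]_n) *m gring_mx rM (c0 *m gring_mx aG c) = 0 /\
   s1 *m gring_mx rS (c0 *m gring_mx aG c) != 0)) => [[c [Hc1 Hc2]] | nE].
  apply: IHj Hc2 => i lti.
  have [ltik | geik] := ltnP i (n - j.+1).
    by rewrite gring_mxA mulmxA H0 // mul0mx.
  have -> : i = i0.
    apply: val_inj => /=; apply/eqP; rewrite eqn_leq geik andbT.
    move: lti geik; rewrite /=; lia.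
  exact: Hc1.
apply: (pair_rich (m := (delta_mx 0 i0 : 'rV[F]_n) *m gring_mx rM c0)
                  (s0 := s1 *m gring_mx rS c0)) => // c.
rewrite -mulmxA -gring_mxA => Hm.
apply/eqP; apply/negPn/negP => nz; apply: nE; exists c; split => //.
by rewrite gring_mxA mulmxA.
Qed.
End Pair.

Local Close Scope group_scope.
Section Coef.
Variables (F : fieldType) (gT : finGroupType) (G : {group gT}).

Definition coef (X : representation F G) (f : gT -> F) :=
  exists L : 'M[F]_(rdegree X), forall x, x \in G -> f x = \tr (L *m X x).

Lemma coef_eq X f g : {in G, f =1 g} -> coef X f -> coef X g.
Proof. by move=> efg [L HL]; exists L => x Gx; rewrite -efg // HL. Qed.

Lemma coef0 X : coef X (fun _ => 0).
Proof. by exists 0 => x _; rewrite mul0mx mxtrace0. Qed.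

Lemma coef_add X f g : coef X f -> coef X g -> coef X (fun x => f x + g x).
Proof.
move=> [L1 H1] [L2 H2]; exists (L1 + L2) => x Gx.
by rewrite mulmxDl mxtraceD H1 ?H2.
Qed.

Lemma coef_scale X a f : coef X f -> coef X (fun x => a * f x).
Proof.
move=> [L H]; exists (a *: L) => x Gx.
by rewrite -scalemxAl mxtraceZ H.
Qed.

Lemma coef_dadd_l X Y f : coef X f -> coef (dadd_grepr X Y) f.
Proof.
move=> [L H]; exists (block_mx L 0 0 0) => x Gx /=.
by rewrite mulmx_block !(mul0mx, mulmx0, addr0) mxtrace_block mxtrace0 addr0 H.
Qed.

Lemma coef_dadd_r X Y f : coef Y f -> coef (dadd_grepr X Y) f.
Proof.
move=> [L H]; exists (block_mx 0 0 0 L) => x Gx /=.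
by rewrite mulmx_block !(mul0mx, mulmx0, add0r) mxtrace_block mxtrace0 add0r H.
Qed.

Lemma coef_dadd_split X Y f : coef (dadd_grepr X Y) f ->
  exists g h, [/\ coef X g, coef Y h & {in G, forall x, f x = g x + h x}].
Proof.
move=> [L H].
exists (fun x => \tr (ulsubmx L *m X x)), (fun x => \tr (drsubmx L *m Y x)).
split; [by exists (ulsubmx L) | by exists (drsubmx L) |] => x Gx.
rewrite H //= -{1}(submxK L) mulmx_block !(mul0mx, mulmx0, addr0, add0r).
by rewrite mxtrace_block.
Qed.

Lemma coef_prod X Y f g : coef X f -> coef Y g ->
  coef (Representation (prod_repr X Y)) (fun x => f x * g x).
Proof.
move=> [L1 H1] [L2 H2]; exists (tprod L1 L2) => x Gx /=.
by rewrite -tprodE mxtrace_prod H1 ?H2.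
Qed.

Lemma coef_entry n (r : mx_representation F G n) i j :
  coef (Representation r) (fun x => r x i j).
Proof.
exists (delta_mx j i) => x Gx /=.
rewrite /mxtrace (bigD1 j) //= big1 ?addr0 => [|k nkj].
  rewrite !mxE (bigD1 i) //= big1 ?addr0 => [|l nli].
    by rewrite !mxE !eqxx mul1r.
  by rewrite !mxE (negPf nli) andbF mul0r.
rewrite mxE big1 // => l _; rewrite mxE (negPf nkj) mul0r //.
Qed.

Lemma coef_triv a : coef (triv_grepr F G) (fun _ => a).
Proof.
by exists (a%:M) => x Gx /=; rewrite mulmx1 mxtrace_scalar.
Qed.

Lemma coef_grepr0 f : coef (@grepr0 F gT G) f -> {in G, forall x, f x = 0}.
Proof. by move=> [L H] x Gx; rewrite H // /mxtrace big_ord0. Qed.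

Lemma coef_ann X f (c : 'rV_#|G|) : coef X f -> gring_mx X c = 0 ->
  \sum_(i < #|G|) c 0 i * f (enum_val i) = 0.
Proof.
move=> [L H] Hc.
transitivity (\tr (L *m gring_mx X c)); last by rewrite Hc mulmx0 mxtrace0.
rewrite gring_mx_sum mulmx_sumr raddf_sum /=.
apply: eq_bigr => i _; rewrite -scalemxAr mxtraceZ H //.
exact: enum_valP.
Qed.
End Coef.
Section Tsum.
Variables (F : fieldType) (gT : finGroupType) (G : {group gT}).
Variables (n : nat) (r : mx_representation F G n).
Local Notation rW := (Representation r).
Local Notation T t := (tsum_grepr rW t).

Definition Sg a m := \big[@dadd_grepr F gT G/@grepr0 F gT G]_(i < m) tpow_grepr rW (a + i).

Lemma SgS a m : Sg a m.+1 = dadd_grepr (tpow_grepr rW a) (Sg a.+1 m).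
Proof.
rewrite /Sg big_ord_recl addn0; congr dadd_grepr.
by apply: eq_bigr => i _; rewrite lift0 addSnnS.
Qed.

Lemma Sg0 a : Sg a 0 = grepr0.
Proof. by rewrite /Sg big_ord0. Qed.

Lemma tsumE t : T t = Sg 0 t.+1.
Proof. by rewrite /tsum_grepr /Sg; apply: eq_bigr => i _; rewrite add0n. Qed.

Lemma coef_Sg_mono m a f : coef (Sg a m) f -> coef (Sg a m.+1) f.
Proof.
elim: m a f => [|m IH] a f.
  rewrite Sg0 => Hf; apply: coef_eq (coef0 _) => x Gx.
  by rewrite (coef_grepr0 Hf).
rewrite SgS => /coef_dadd_split [g [h [Hg Hh Hf]]].
rewrite SgS; apply: coef_eq (coef_add (coef_dadd_l _ Hg) (coef_dadd_r _ (IH _ _ Hh))).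
by move=> x Gx; rewrite Hf.
Qed.

Lemma coef_Sg_mul m a f i j :
  coef (Sg a m) f -> coef (Sg a.+1 m) (fun x => f x * r x i j).
Proof.
elim: m a f => [|m IH] a f.
  rewrite !Sg0 => Hf; apply: coef_eq (coef0 _) => x Gx.
  by rewrite (coef_grepr0 Hf) // mul0r.
rewrite SgS => /coef_dadd_split [g [h [Hg Hh Hf]]].
rewrite SgS.
apply: coef_eq (coef_add (coef_dadd_l _ (coef_prod (coef_entry r i j) Hg))
                         (coef_dadd_r _ (IH _ _ Hh))).
by move=> x Gx /=; rewrite Hf // mulrDl [g x * _]mulrC.
Qed.

Lemma coef_tsum_mono t f : coef (T t) f -> coef (T t.+1) f.
Proof. by rewrite !tsumE; apply: coef_Sg_mono. Qed.

Lemma coef_tsum_const t a : coef (T t) (fun _ => a).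
Proof. by rewrite tsumE SgS; apply: coef_dadd_l; apply: coef_triv. Qed.

Lemma coef_tsum_mul t f i j :
  coef (T t) f -> coef (T t.+1) (fun x => f x * r x i j).
Proof.
rewrite !tsumE => /(coef_Sg_mul i j) Hf.
by rewrite SgS; apply: coef_dadd_r.
Qed.

Lemma coef_tsum_aff t f i j a b :
  coef (T t) f -> coef (T t.+1) (fun x => f x * (b * r x i j + a)).
Proof.
move=> Hf.
apply: coef_eq (coef_add (coef_scale b (coef_tsum_mul i j Hf))
                         (coef_scale a (coef_tsum_mono Hf))).
by move=> x Gx /=; rewrite mulrDr mulrCA mulrA [a * _]mulrC.
Qed.

Section Ind.
Variable g0 : gT.

Definition lfac (y x : gT) : F :=
  if [pick ij : 'I_n * 'I_n | r y ij.1 ij.2 != r g0 ij.1 ij.2] is Some ij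
  then (r x ij.1 ij.2 - r y ij.1 ij.2) / (r g0 ij.1 ij.2 - r y ij.1 ij.2)
  else 1.

Lemma lfac_aff a : (exists i j b c, forall x, lfac a x = b * r x i j + c) \/
  (forall x, lfac a x = 1).
Proof.
rewrite /lfac; case: pickP => [ij _ | _]; last by right.
left; exists ij.1, ij.2, (r g0 ij.1 ij.2 - r a ij.1 ij.2)^-1,
  (- r a ij.1 ij.2 / (r g0 ij.1 ij.2 - r a ij.1 ij.2)) => x.
by rewrite mulrBl mulNr mulrC.
Qed.

Lemma coef_lfac (l : seq gT) :
  coef (T (size l)) (fun x => \prod_(y <- l) lfac y x).
Proof.
elim: l => [|a l IH] /=.
  by apply: coef_eq (coef_tsum_const 0 1) => x _; rewrite big_nil.
case: (lfac_aff a) => [[i [j [b [c Hl]]]] | Hl].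
  by apply: coef_eq (coef_tsum_aff i j c b IH) => x _ /=; rewrite big_cons Hl mulrC.
apply: coef_eq (coef_tsum_mono IH) => x _ /=.
by rewrite big_cons Hl mul1r.
Qed.

Lemma lfac_val x : x \in G ->
  \prod_(y <- enum G) lfac y x = (r x == r g0)%:R.
Proof.
move=> Gx; case: eqP => [e | ne].
  rewrite big1_seq // => y _; rewrite /lfac; case: pickP => [ij /= nij|//].
  by rewrite e divff // subr_eq0 eq_sym.
rewrite (bigD1_seq x) ?mem_enum ?enum_uniq //=.
rewrite /lfac; case: pickP => [ij _ | none].
  by rewrite subrr mul0r mul0r.
case: ne; apply/matrixP => i j.
by move: (none (i, j)) => /= /negbFE /eqP.
Qed.

Lemma coef_ind : g0 \in G -> coef (T #|G|) (fun x => (r x == r g0)%:R).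
Proof.
move=> Gg0; rewrite cardE.
by apply: coef_eq (coef_lfac (enum G)) => x Gx; rewrite lfac_val.
Qed.
End Ind.

Lemma tsum_ann_fib (c : 'rV_#|G|) : gring_mx (T #|G|) c = 0 ->
  forall g0, g0 \in G ->
    \sum_(i < #|G|) c 0 i * (r (enum_val i) == r g0)%:R = 0.
Proof. by move=> Hc g0 Gg0; apply: coef_ann (coef_ind Gg0) Hc. Qed.

Lemma fiber_zero s (rS : mx_representation F G s) (c : 'rV_#|G|) :
  (forall x y, x \in G -> y \in G -> r x = r y -> rS x = rS y) ->
  (forall g0, g0 \in G ->
    \sum_(i < #|G|) c 0 i * (r (enum_val i) == r g0)%:R = 0) ->
  gring_mx rS c = 0.
Proof.
move=> Hfib Hind; rewrite gring_mx_sum.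
pose rho (i : 'I_#|G|) : 'I_#|G| :=
  odflt i [pick j : 'I_#|G| | r (enum_val j) == r (enum_val i)].
have rho_r i : r (enum_val (rho i)) = r (enum_val i).
  by rewrite /rho; case: pickP => [j /eqP //|].
have rho_eq i k : r (enum_val i) = r (enum_val k) -> rho i = rho k.
  move=> e; rewrite /rho e; case: pickP => // none.
  by move: (none k); rewrite eqxx.
under eq_bigr => i _ do
  rewrite (Hfib (enum_val i) (enum_val (rho i))) ?enum_valP ?rho_r //.
rewrite (partition_big rho xpredT) //=.
apply: big1 => j _.
rewrite (eq_bigr (fun i => c 0 i *: rS (enum_val j))); last first.
  by move=> i /eqP ->.
rewrite -scaler_suml.
suff -> : \sum_(i | rho i == j) c 0 i = 0 by rewrite scale0r.
case: (eqVneq (rho j) j) => [rjj | rjj].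
  rewrite (eq_bigl (fun i => r (enum_val i) == r (enum_val j))); last first.
    move=> i; apply/eqP/eqP => [<- | e]; first by rewrite rho_r.
    by rewrite (rho_eq _ _ e).
  transitivity (\sum_(i < #|G|) c 0 i * (r (enum_val i) == r (enum_val j))%:R).
    rewrite big_mkcond /=.
    by apply: eq_bigr => i _; case: eqP; rewrite ?mulr1 ?mulr0.
  exact: Hind (enum_valP j).
rewrite big_pred0 // => i; apply/negP => /eqP ei.
by case/eqP: rjj; rewrite -ei; apply: rho_eq; rewrite rho_r.
Qed.
End Tsum.
Section Ker.
Variables (F : fieldType) (gT : finGroupType) (G : {group gT}).
Variables (n : nat) (r : mx_representation F G n).
Variables (s : nat) (rS : mx_representation F G s).

Lemma fib_of_ker : rker r \subset rker rS ->
  forall x y, x \in G -> y \in G -> r x = r y -> rS x = rS y.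
Proof.
move=> sK x y Gx Gy e.
have Gxy : (x * y^-1)%g \in G by rewrite groupM ?groupV.
have : (x * y^-1)%g \in rker r.
  apply/rkerP; split => //.
  by rewrite repr_mxM ?groupV // repr_mxV // e mulmxV // repr_mx_unit.
move/(subsetP sK)/rkerP => [_ e1].
by rewrite -[x](mulgVK y) repr_mxM // e1 mul1mx.
Qed.

Lemma pker_sub : pgroup [pchar F] (rker r) -> mx_irreducible rS ->
  rker r \subset rker rS.
Proof.
move=> pK irrS.
have [K1 | ntK] := eqVneq (rker r) 1%g; first by rewrite K1 sub1G.
have [s_gt0 irr] := proj1 (mx_irrP rS) irrS.
have gt1 : (1 < #|rker r|)%N by rewrite cardG_gt1.
have p_pr := pdiv_prime gt1.
set p := pdiv _ in p_pr.
have pK' : p \in [pchar F].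
  by apply: (pgroupP pK) => //; apply: pdiv_dvd.
have pKp : pgroup p (rker r).
  by apply: sub_in_pnat pK => q _; rewrite (pcharf_eq pK').
have sKG : rker r \subset G := rstab_sub _ _.
have nz := @rfix_pgroup_pchar F p gT pK' G (rker r) s rS s_gt0 pKp sKG.
have modK := normal_rfix_mx_module rS (rker_normal r).
apply/subsetP => x Kx; apply/rkerP; split; first exact: (subsetP sKG).
have : (1%:M <= rfix_mx rS (rker r))%MS.
  by rewrite sub1mx; exact: irr _ modK nz.
by move/rfix_mxP => /(_ x Kx); rewrite mul1mx.
Qed.
End Ker.

Local Open Scope group_scope.
Theorem proposition7p5 (F : closedFieldType) (gT : finGroupType) (G : {group gT})
    (n : nat) (rG : mx_representation F G n) :
  preg_ker_subgroup rG <| G /\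
  exists rGq : mx_representation F (G / preg_ker_subgroup rG)%G n,
    {in G, forall x, rGq (coset (preg_ker_subgroup rG) x) = rG x} /\
    tensor_rich (Representation rGq).
Proof.
set N := preg_ker_subgroup rG.
have sNk : N \subset rker rG.
  by rewrite /N /preg_ker_subgroup gen_subG; apply/subsetP => x; rewrite inE => /andP[].
have nNG : G \subset 'N(N).
  rewrite /N /preg_ker_subgroup /=; apply: norms_gen.
  apply/subsetP => g Gg; rewrite inE; apply/subsetP => _ /imsetP[y Ay ->].
  move: Ay; rewrite in_set => /andP[yK yreg].
  have yKg : y ^ g \in rker rG by rewrite memJ_norm // (subsetP (rker_norm rG)).
  by rewrite in_set yKg /p_regular orderJ.
split.
  by rewrite /normal nNG (subset_trans sNk) ?rstab_sub.
exists (quo_repr sNk nNG); split.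
  by move=> x Gx; rewrite quo_repr_coset.
exists #|(G / N)%G|; split; first exact: cardG_gt0.
rewrite /rich => rS irrS.
apply: (ann_rich irrS) => c Hc.
apply: (fiber_zero (r := quo_repr sNk nNG)); last exact: tsum_ann_fib Hc.
apply: fib_of_ker; apply: pker_sub irrS.
rewrite rker_quo; apply/pgroupP => p p_pr /(Cauchy p_pr) [x xK oxp].
case/morphimP: xK oxp => g Ng gK -> oxp.
set pi := [pchar F].
have cyc : <[g]> \subset rker rG by rewrite cycle_subG.
have hN : g.`_pi^' \in N.
  rewrite /N mem_gen // inE (subsetP cyc) ?cycle_constt //= /p_regular.
  by rewrite unitfE natf_neq0_pchar; apply: p_elt_constt.
have cycN : <[g]> \subset 'N(N) by rewrite cycle_subG.
have gpN : g.`_pi \in 'N(N) := subsetP cycN _ (cycle_constt _ _).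
have hNN : g.`_pi^' \in 'N(N) := subsetP cycN _ (cycle_constt _ _).
have ecos : coset N g = coset N g.`_pi.
  by rewrite -{1}(consttC pi g) morphM //= (coset_id hN) mulg1.
rewrite -(pnatE pi p_pr) -oxp /= ecos.
apply: pnat_dvd (morph_order (coset_morphism N) gpN) (p_elt_constt pi g).
Qed.
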